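(* Let $(\Omega,\mathcal{A},\mu)$ be a finite measure space and let $(f_n)_{n\in\mathbb{N}_0}$ be a sequence of non-negative functions in $L^1(\Omega,\mathcal{A},\mu)$ for which there exists $g\in L^1(\Omega,\mathcal{A},\mu)$ with $f_n\le g$ a.e. for all $n\in\mathbb{N}_0$. Then $\frac{1}{n}\sum_{j=0}^{n-1}f_j\to 0$ as $n\to\infty$ if and only if there is a sequence of measurable sets $(A_n)_{n\in\mathbb{N}_0}$ in $\mathcal{A}$ with $\frac{1}{n}\sum_{j=0}^{n-1}\chi_{A_j}\to 0$ and $\chi_{\Omega\setminus A_n}f_n\to 0$ as $n\to\infty$. Here all the limits may be taken either a.e. pointwise or in $L^1$ norm.
   Context: $\chi_A$ denotes the characteristic (indicator) function of a set $A$. *)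

(* Defs.v *)
From HB Require Import structures.
From mathcomp Require Import all_boot all_order all_algebra.
From mathcomp Require Import all_classical all_reals all_analysis.
Set Implicit Arguments. Unset Strict Implicit. Unset Printing Implicit Defensive.
Import Order.TTheory GRing.Theory Num.Theory.
Import numFieldNormedType.Exports.
Local Open Scope classical_set_scope.
Local Open Scope ring_scope.

Definition avg (T : Type) (R : realType) (u : nat -> T -> R) (n : nat) (x : T) : R :=
  (n%:R)^-1 * \sum_(j < n) u j x.

Definition cvg0_ae (d : measure_display) (T : measurableType d) (R : realType)
  (mu : {measure set T -> \bar R}) (h : nat -> T -> R) : Prop :=
  {ae mu, forall x, (fun n => h n x) @ \oo --> (0 : R)}.

Definition cvg0_L1 (d : measure_display) (T : measurableType d) (R : realType)
  (mu : {measure set T -> \bar R}) (h : nat -> T -> R) : Prop :=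
  ((fun n => \int[mu]_x (`|h n x|)%:E) @ \oo --> 0)%E.

(* Main.v *)
From HB Require Import structures.
From mathcomp Require Import all_boot all_order all_algebra.
From mathcomp Require Import all_classical all_reals all_analysis.
Set Implicit Arguments. Unset Strict Implicit. Unset Printing Implicit Defensive.
Import Order.TTheory GRing.Theory Num.Theory.
Import numFieldNormedType.Exports.
Local Open Scope classical_set_scope.
Local Open Scope ring_scope.
Require Import Defs.
From mathcomp Require Import measurable_realfun measurable_fun_approximation.
From mathcomp Require Import lra.
Section reals.
Variable R : realType.
Implicit Types (u b a : nat -> R).

Definition av u n : R := n%:R^-1 * \sum_(j < n) u j.

Lemma cesaro_av u : u @ \oo --> 0 -> av u @ \oo --> 0.
Proof.
move=> /cesaro h; rewrite -cvg_shiftS.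
apply: cvg_trans h; apply: near_eq_cvg; near=> n => /=.
by rewrite /av /arithmetic_mean /series /= big_mkord.
Unshelve. all: by end_near. Qed.

Lemma av_ge0 u n : (forall j, 0 <= u j) -> 0 <= av u n.
Proof. by move=> h; rewrite /av mulr_ge0 ?sumr_ge0. Qed.

Lemma sqrt_cvg0 u : u @ \oo --> 0 -> (fun n => Num.sqrt (u n)) @ \oo --> 0.
Proof.
move=> h; rewrite -sqrtr0; apply: continuous_cvg => //; exact: sqrt_continuous.
Qed.

Definition ee b n := sups (fun m => Num.min (b m) 1) n + n.+1%:R^-1.

Lemma ub_min b : has_ubound (range (fun m => Num.min (b m) 1)).
Proof. by exists 1 => _ [m _ <-]; rewrite ge_min lexx orbT. Qed.

Lemma sups_ge b n : Num.min (b n) 1 <= sups (fun m => Num.min (b m) 1) n.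
Proof.
apply: ub_le_sup; first exact/has_ubound_sdrop/ub_min.
by exists n => /=.
Qed.

Lemma ee_gt0 b n : (forall j, 0 <= b j) -> 0 < ee b n.
Proof.
move=> b0; rewrite /ee ltr_pwDr ?invr_gt0 ?ltr0n//.
by apply: le_trans (sups_ge b n); rewrite le_min b0 ler01.
Qed.

Lemma ee_noninc b m n : (m <= n)%N -> ee b n <= ee b m.
Proof.
move=> mn; rewrite /ee lerD//; first exact: (nonincreasing_sups (ub_min b)).
by rewrite lef_pV2 ?posrE ?ltr0n// ler_nat.
Qed.

Lemma ee_ge b n : b n <= 1 -> b n <= ee b n.
Proof.
move=> b1; rewrite /ee; have h1 : b n <= Num.min (b n) 1 by rewrite le_min b1 lexx.
apply: (le_trans h1); apply: (le_trans (sups_ge b n)).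
by rewrite lerDl invr_ge0.
Qed.

Lemma ee_cvg b : (forall j, 0 <= b j) -> b @ \oo --> 0 -> ee b @ \oo --> 0.
Proof.
move=> b0 bc; rewrite -[0]addr0; apply: cvgD; last exact: cvg_harmonic.
apply: cvg_sups; apply: (squeeze_cvgr _ (cvg_cst 0) bc).
by near=> n; rewrite le_min b0 ler01 ge_min lexx.
Unshelve. all: by end_near. Qed.


Lemma ind_le (y t : R) : 0 <= y -> 0 < t -> ((t < y ^+ 2)%R%:R : R) <= y / Num.sqrt t.
Proof.
move=> y0 t0; case: ltP => h; last by rewrite divr_ge0.
have st : Num.sqrt t < y.
  by rewrite -(ger0_norm y0) -sqrtr_sqr ltr_sqrt// (lt_trans t0 h).
by rewrite ler_pdivlMr ?sqrtr_gt0// mul1r ltW.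
Qed.

Lemma comp_le (y t : R) : 0 <= y -> 0 <= t -> (~~ (t < y ^+ 2)%R)%:R * y <= Num.sqrt t.
Proof.
move=> y0 t0; case: ltP => h /=; first by rewrite mul0r sqrtr_ge0.
by rewrite mul1r -(ger0_norm y0) -sqrtr_sqr ler_sqrt.
Qed.

Lemma av_ind_le (a e : nat -> R) n : (forall j, 0 <= a j) -> (forall j, 0 < e j) ->
  (forall i j, (i <= j)%N -> e j <= e i) ->
  av (fun j => (e j < a j ^+ 2)%R%:R) n <= av a n / Num.sqrt (e n).
Proof.
move=> a0 e0 en; rewrite /av -mulrA ler_wpM2l// mulr_suml; apply: ler_sum => i _.
apply: (le_trans (ind_le (a0 i) (e0 i))); rewrite ler_wpM2l// lef_pV2 ?posrE ?sqrtr_gt0//.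
rewrite ler_sqrt//; [exact/en/ltnW | exact/ltW].
Qed.

Lemma div_sqrt_le b n : (forall j, 0 <= b j) -> b n <= 1 ->
  b n / Num.sqrt (ee b n) <= Num.sqrt (b n).
Proof.
move=> b0 b1; have e0 := ee_gt0 n b0; have be := ee_ge b1.
rewrite ler_pdivrMr ?sqrtr_gt0//.
rewrite -{1}(sqr_sqrtr (b0 n)) expr2 ler_wpM2l ?sqrtr_ge0// ler_sqrt// (ltW e0) //.
Qed.

Lemma fwd_pw a : (forall j, 0 <= a j) -> av a @ \oo --> 0 ->
  av (fun j => (ee (av a) j < a j ^+ 2)%R%:R) @ \oo --> 0 /\
  (fun n => (~~ (ee (av a) n < a n ^+ 2)%R)%:R * a n) @ \oo --> 0.
Proof.
move=> a0 ac; have b0 j : 0 <= av a j by apply: av_ge0.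
have e0 j := ee_gt0 j b0.
have en : forall i j, (i <= j)%N -> ee (av a) j <= ee (av a) i by move=> i j; apply: ee_noninc.
split.
  apply: (squeeze_cvgr _ (cvg_cst 0) (sqrt_cvg0 ac)).
  have : \forall n \near \oo, av a n < 1 by apply: (cvgr_lt 0) => //; exact: ltr01.
  apply: filterS => n an1; apply/andP; split.
    by apply: av_ge0 => j; case: ltP.
  apply: (le_trans (av_ind_le n a0 e0 en)); exact: div_sqrt_le (ltW an1).
apply: (squeeze_cvgr _ (cvg_cst 0) (sqrt_cvg0 (ee_cvg b0 ac))).
near=> n; rewrite comp_le ?andbT ?(ltW (e0 n))//.
by rewrite mulr_ge0.
Unshelve. all: by end_near. Qed.

Lemma bwd_pw (a c : nat -> R) G : (forall j, 0 <= a j <= G) ->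
  (forall j, 0 <= c j <= 1) -> av c @ \oo --> 0 ->
  (fun n => (1 - c n) * a n) @ \oo --> 0 -> av a @ \oo --> 0.
Proof.
move=> aG c01 cc h.
have -> : av a = fun n => av (fun j => (1 - c j) * a j) n + av (fun j => c j * a j) n.
  apply/funext => n; rewrite /av -mulrDr -big_split /=; congr (_ * _).
  by apply: eq_bigr => i _; rewrite -mulrDl subrK mul1r.
rewrite -[0]addr0; apply: cvgD; first exact: cesaro_av.
have G0 : 0 <= G by case/andP: (aG 0%N) => /le_trans; apply.
have hG : (fun n => G * av c n) @ \oo --> 0.
  by rewrite -(mulr0 G); apply: cvgM => //; exact: cvg_cst.
apply: (@squeeze_cvgr _ _ _ _ (fun=> 0) (fun n => G * av c n)); last 2 first.
- exact: cvg_cst.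
- exact: hG.
near=> n.
have c0 j := andP (c01 j); have a0 j := andP (aG j).
rewrite av_ge0 => [/=|j]; last by rewrite mulr_ge0 ?(c0 j).1 ?(a0 j).1.
rewrite /av mulrCA ler_wpM2l// mulr_sumr; apply: ler_sum => i _.
by rewrite mulrC ler_wpM2r ?(c0 i).1 ?(a0 i).2.
Unshelve. all: by end_near. Qed.

End reals.

Lemma in_set_bool (T : Type) (b : T -> bool) x : (x \in [set y | b y]) = b x.
Proof. by apply/idP/idP => [/set_mem|/mem_set]. Qed.

Lemma indicCR (T : Type) (R : realType) (A : set T) x : \1_(~` A) x = 1 - \1_A x :> R.
Proof. by rewrite indicC indicE; case: (x \in A); rewrite ?subrr ?subr0. Qed.


Section ehelp.
Variable R : realType.
Local Open Scope ereal_scope.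

Lemma EFin_cvg0 (v : nat -> R) : v @ \oo --> 0%R -> (fun n => (v n)%:E) @ \oo --> 0.
Proof. by move=> h; apply: cvg_EFin; [exact: nearW | exact: h]. Qed.

Lemma ecvg_ev (u : nat -> \bar R) : u @ \oo --> 0 ->
  forall e : R, (0 < e)%R -> \forall n \near \oo, u n <= e%:E.
Proof.
move=> /fine_cvgP [uf uc] e e0.
have ue' : \forall n \near \oo, (fine (u n) < e)%R by exact: (cvgr_lt 0%R uc).
apply: (filterS2 _ _ uf ue') => n ufin ue.
by rewrite -(fineK ufin) lee_fin ltW.
Qed.

Lemma ecvg0_le (u : nat -> \bar R) : (forall n, 0 <= u n) ->
  (forall e : R, (0 < e)%R -> \forall n \near \oo, u n <= e%:E) -> u @ \oo --> 0.
Proof.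
move=> u0 h; apply/fine_cvgP; split.
  apply: (filterS _ (h 1%R ltr01)) => n un.
  by rewrite fin_numElt (lt_le_trans _ (u0 n)) ?ltNyr// (le_lt_trans un) ?ltry.
apply/cvgrPdist_le => e e0; apply: (filterS2 _ _ (h 1%R ltr01) (h e e0)) => n u1 ue /=.
have ufin : u n \is a fin_num.
  by rewrite fin_numElt (lt_le_trans _ (u0 n)) ?ltNyr// (le_lt_trans u1) ?ltry.
rewrite sub0r normrN ger0_norm ?fine_ge0//.
by rewrite -lee_fin (fineK ufin).
Qed.

End ehelp.

Section part_ae.
Context d (T : measurableType d) (R : realType) (mu : {finite_measure set T -> \bar R})
  (f : nat -> T -> R) (g : T -> R).
Hypothesis fi : forall n, mu.-integrable setT (fun x => (f n x)%:E).
Hypothesis f0 : forall n, {ae mu, forall x, 0 <= f n x}.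
Hypothesis gi : mu.-integrable setT (fun x => (g x)%:E).
Hypothesis fg : forall n, {ae mu, forall x, f n x <= g x}.

Lemma mf n : measurable_fun setT (f n).
Proof. exact/measurable_EFinP/(measurable_int mu (fi n)). Qed.

Lemma good : {ae mu, forall x, (forall n, 0 <= f n x) /\ (forall n, f n x <= g x)}.
Proof.
have h1 := ae_foralln f0; have h2 := ae_foralln fg.
by apply: (filterS2 _ _ h1 h2) => x.
Qed.

Lemma mavg n : measurable_fun setT (avg f n).
Proof.
rewrite /avg; apply: (@measurable_funM _ _ _ _ (cst (n%:R^-1)) (fun x => \sum_(j < n) f j x)).
  exact: measurable_cst.
by apply: measurable_sum => j; exact: mf.
Qed.

Lemma mee n : measurable_fun setT (fun x => ee (fun m => avg f m x) n).
Proof.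
rewrite /ee; apply: measurable_funD; last exact: measurable_cst.
apply: (@measurable_fun_sups _ _ _ _ (fun m x => Num.min (avg f m x) 1)).
  by move=> x _; exact: ub_min.
by move=> m; apply: measurable_minr; [exact: mavg | exact: measurable_cst].
Qed.

Lemma meas_lt (F G : T -> R) : measurable_fun setT F -> measurable_fun setT G ->
  measurable [set x | F x < G x].
Proof.
move=> mF mG; have mt : measurable [set true] by [].
have := measurable_fun_ltr mF mG measurableT mt.
by rewrite setTI.
Qed.

Lemma ae_fwd : cvg0_ae mu (avg f) ->
    exists A : nat -> set T, (forall n, measurable (A n)) /\
      cvg0_ae mu (avg (fun n => \1_(A n))) /\
      cvg0_ae mu (fun n x => \1_(~` A n) x * f n x).
Proof.
move=> H; rewrite /cvg0_ae in H.
pose A := fun n => [set x | ee (fun m => avg f m x) n < f n x ^+ 2].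
exists A; split.
  move=> n; apply: meas_lt; first exact: mee.
  exact: measurable_funX (mf n).
have key : {ae mu, forall x, (fun n => avg (fun n => (\1_(A n) : T -> R)) n x) @ \oo --> 0 /\
   (fun n => \1_(~` A n) x * f n x) @ \oo --> 0}.
  apply: (filterS2 _ _ good H) => x [x0 _] hx.
  have [h1 h2] := fwd_pw x0 hx.
  split.
    apply: cvg_trans h1; apply: near_eq_cvg; near=> n.
    rewrite /avg /av; congr (_ * _); apply: eq_bigr => j _.
    by rewrite indicE in_set_bool.
  apply: cvg_trans h2; apply: near_eq_cvg; near=> n.
  by rewrite indicCR indicE in_set_bool; case: ltP; rewrite ?subrr ?subr0.
by split; apply: filterS key => x [].
Unshelve. all: by end_near. Qed.

Lemma ae_bwd : (exists A : nat -> set T, (forall n, measurable (A n)) /\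
      cvg0_ae mu (avg (fun n => \1_(A n))) /\
      cvg0_ae mu (fun n x => \1_(~` A n) x * f n x)) -> cvg0_ae mu (avg f).
Proof.
move=> [A [_ [h1 h2]]]; rewrite /cvg0_ae in h1 h2 *.
have h12 : {ae mu, forall x, (fun n => avg (fun n => (\1_(A n) : T -> R)) n x) @ \oo --> 0 /\
   (fun n => \1_(~` A n) x * f n x) @ \oo --> 0}.
  by apply: (filterS2 _ _ h1 h2) => x.
have imp : forall x, ((forall n, 0 <= f n x) /\ (forall n, f n x <= g x)) ->
  ((fun n => avg (fun n => (\1_(A n) : T -> R)) n x) @ \oo --> 0 /\
   (fun n => \1_(~` A n) x * f n x) @ \oo --> 0) -> (fun n => avg f n x) @ \oo --> 0.
  move=> x [x0 xg] [c1 c2].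
  apply: (@bwd_pw _ (fun j => f j x) (fun j => \1_(A j) x) (g x)) => //.
  - by move=> j; rewrite x0 xg.
  - by move=> j; rewrite indicE; case: (x \in A j); rewrite ?ler01 ?lexx.
  - apply: cvg_trans c2; apply: near_eq_cvg; near=> n.
    by rewrite indicCR.
exact: (filterS2 _ imp good h12).
Unshelve. all: by end_near. Qed.


Lemma mavgu (u : nat -> T -> R) n : (forall j, measurable_fun setT (u j)) ->
  measurable_fun setT (avg u n).
Proof.
move=> mu_; rewrite /avg; apply: (@measurable_funM _ _ _ _ (cst (n%:R^-1)) (fun x => \sum_(j < n) u j x)).
  exact: measurable_cst.
by apply: measurable_sum => j; exact: mu_.
Qed.

Lemma mEabs (h : T -> R) : measurable_fun setT h -> measurable_fun setT (fun x => (`|h x|)%:E).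
Proof. by move=> mh; apply/measurable_EFinP; exact: measurableT_comp. Qed.

Lemma L1_fwd : cvg0_L1 mu (avg f) ->
    exists A : nat -> set T, (forall n, measurable (A n)) /\
      cvg0_L1 mu (avg (fun n => \1_(A n))) /\
      cvg0_L1 mu (fun n x => \1_(~` A n) x * f n x).
Proof.
move=> H; rewrite /cvg0_L1 in H.
pose b n := fine (\int[mu]_x (`|avg f n x|)%:E).
have b0 n : 0 <= b n by apply: fine_ge0; apply: integral_ge0 => x _; rewrite lee_fin.
have bc : b @ \oo --> 0 by exact: fine_cvg H.
have bfin : \forall n \near \oo, (\int[mu]_x (`|avg f n x|)%:E)%E \is a fin_num.
  exact: cvg_is_fine H.
pose e := ee b.
have e0 n : 0 < e n := ee_gt0 n b0.
have en : forall i j, (i <= j)%N -> e j <= e i by move=> i j; exact: ee_noninc.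
pose A n := [set x | e n < f n x ^+ 2].
have mA n : measurable (A n).
  by apply: meas_lt; [exact: measurable_cst | exact: measurable_funX (mf n)].
have mind n : measurable_fun setT (\1_(A n) : T -> R) by exact: measurable_indic.
exists A; split => //; split.
- rewrite /cvg0_L1.
  apply: (@squeeze_cvge _ _ _ _ (fun=> 0%E) _ (fun n => (Num.sqrt (b n))%:E)); last 2 first.
  + exact: cvg_cst.
  + exact: EFin_cvg0 (sqrt_cvg0 bc).
  have b1 : \forall n \near \oo, b n < 1 by exact: (cvgr_lt 0 bc).
  apply: (filterS2 _ _ bfin b1) => n nfin nb1; apply/andP; split.
    by apply: integral_ge0 => x _; rewrite lee_fin.
  apply: (@le_trans _ _ (\int[mu]_x ((`|avg f n x| / Num.sqrt (e n))%:E))%E).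
    apply: ae_ge0_le_integral => //.
    + by apply: mEabs; exact: mavgu.
    + apply/measurable_EFinP; apply: measurable_funM; last exact: measurable_cst.
      by apply: measurableT_comp => //; exact: mavg.
    + apply: (filterS _ good) => x [x0 _] _; rewrite lee_fin.
      have -> : avg (fun n => (\1_(A n) : T -> R)) n x = av (fun j => (e j < f j x ^+ 2)%R%:R) n.
        by rewrite /avg /av; congr (_ * _); apply: eq_bigr => j _; rewrite indicE in_set_bool.
      rewrite ger0_norm; last by apply: av_ge0 => j; case: ltP.
      apply: (le_trans (av_ind_le n x0 e0 en)).
      by rewrite ler_wpM2r ?invr_ge0 ?sqrtr_ge0// real_ler_norm// num_real.
  under eq_integral do rewrite EFinM.
  rewrite ge0_integralZr//; last by apply: mEabs; exact: mavg.
  rewrite -(fineK nfin) -EFinM lee_fin; exact: div_sqrt_le (ltW nb1).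
- rewrite /cvg0_L1.
  apply: (@squeeze_cvge _ _ _ _ (fun=> 0%E) _ (fun n => (Num.sqrt (e n) * fine (mu setT))%:E)); last 2 first.
  + exact: cvg_cst.
  + apply: EFin_cvg0; rewrite -(mul0r (fine (mu setT))); apply: cvgM; last exact: cvg_cst.
    exact: sqrt_cvg0 (ee_cvg b0 bc).
  apply: nearW => n; apply/andP; split.
    by apply: integral_ge0 => x _; rewrite lee_fin.
  apply: (@le_trans _ _ (\int[mu]_x (cst (Num.sqrt (e n))%:E x))%E).
    apply: ae_ge0_le_integral => //.
    + apply: mEabs; apply: measurable_funM => //; last exact: mf.
      by apply: measurable_indic; exact: measurableC.
    + by move=> x _; rewrite /= lee_fin sqrtr_ge0.
    + apply: (filterS _ good) => x [x0 _] _; rewrite /= lee_fin.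
      rewrite indicC /= in_set_bool ger0_norm ?mulr_ge0//.
      exact: comp_le (ltW (e0 n)).
  rewrite integral_cst// EFinM (fineK (fin_num_measure mu setT measurableT)).
  by [].
Unshelve. all: by end_near. Qed.

Lemma bwd_bound (a c : nat -> R) G M n : (forall j, 0 <= a j <= G) ->
  (forall j, 0 <= c j <= 1) -> 0 <= M ->
  `|av a n| <= av (fun j => `|(1 - c j) * a j|) n + M * `|av c n| + Num.max (G - M) 0.
Proof.
move=> aG c01 M0.
have c0 j := andP (c01 j); have a0 j := andP (aG j).
have -> : av a n = av (fun j => (1 - c j) * a j) n + av (fun j => c j * a j) n.
  rewrite /av -mulrDr -big_split /=; congr (_ * _).
  by apply: eq_bigr => i _; rewrite -mulrDl subrK mul1r.
rewrite -addrA; apply: (le_trans (ler_normD _ _)); apply: lerD.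
  rewrite /av normrM ger0_norm ?invr_ge0// ler_wpM2l ?invr_ge0//.
  exact: ler_norm_sum.
have m0 : 0 <= Num.max (G - M) 0 by rewrite le_max lexx orbT.
rewrite ger0_norm; last by apply: av_ge0 => j; rewrite mulr_ge0 ?(c0 j).1 ?(a0 j).1.
apply: (@le_trans _ _ (av (fun j => M * c j + Num.max (G - M) 0) n)).
  rewrite /av ler_wpM2l ?invr_ge0//; apply: ler_sum => i _.
  apply: (@le_trans _ _ (c i * G)); first by rewrite ler_wpM2l ?(c0 i).1 ?(a0 i).2.
  have -> : c i * G = M * c i + c i * (G - M) by rewrite mulrBr addrCA [M * _]mulrC subrr addr0.
  rewrite lerD2l; apply: (@le_trans _ _ (c i * Num.max (G - M) 0)).
    by rewrite ler_wpM2l ?(c0 i).1// le_max lexx.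
  by rewrite -{2}(mul1r (Num.max _ _)) ler_wpM2r ?(c0 i).2.
rewrite /av big_split /= mulrDr -mulr_sumr mulrCA; apply: lerD.
  by rewrite ler_wpM2l// real_ler_norm// num_real.
rewrite sumr_const card_ord; case: n => [|n]; first by rewrite invr0 mul0r.
have -> : Num.max (G - M) 0 *+ n.+1 = n.+1%:R * Num.max (G - M) 0 by rewrite mulr_natl.
by rewrite -mulr_natl mulrA mulVf ?mul1r// pnatr_eq0.
Qed.

Lemma L1_bwd : (exists A : nat -> set T, (forall n, measurable (A n)) /\
      cvg0_L1 mu (avg (fun n => \1_(A n))) /\
      cvg0_L1 mu (fun n x => \1_(~` A n) x * f n x)) -> cvg0_L1 mu (avg f).
Proof.
move=> [A [mA [h1 h2]]]; rewrite /cvg0_L1 in h1 h2 *.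
have mg : measurable_fun setT g by exact/measurable_EFinP/(measurable_int mu gi).
apply: ecvg0_le; first by move=> n; apply: integral_ge0 => x _; rewrite lee_fin.
move=> eps eps0.
pose e3 := eps / 3.
have e30 : 0 < e3 by rewrite divr_gt0.
have [M hM] : exists M : nat, (\int[mu]_x (Num.max (g x - M%:R) 0)%:E <= e3%:E)%E.
  have mf_ : forall M : nat, measurable_fun setT (fun x => (Num.max (g x - M%:R) 0)%:E).
    move=> M; apply/measurable_EFinP; apply: measurable_maxr; last exact: measurable_cst.
    by apply: measurable_funB => //; exact: measurable_cst.
  have f_f : {ae mu, forall x, setT x -> (fun M : nat => (Num.max (g x - M%:R) 0)%:E) @ \oo --> (cst 0%E x)}.
    apply: aeW => x _.
    apply: cvg_near_cst; near=> M => /=.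
    have gM : g x < M%:R by near: M; exact: nbhs_infty_gtr.
    by congr (_%:E); apply/max_idPr; rewrite subr_le0 ltW.
  have ig : mu.-integrable setT (fun x => (`|g x|)%:E) by exact: integrable_abse gi.
  have f_g : {ae mu, forall x (M : nat), setT x -> (`|(Num.max (g x - M%:R) 0)%:E| <= (`|g x|)%:E)%E}.
    apply: (filterS _ good) => x [x0 xg] M _.
    have g0 : 0 <= g x := le_trans (x0 0%N) (xg 0%N).
    rewrite abse_EFin lee_fin ger0_norm ?le_max ?lexx ?orbT// ger0_norm//.
    by rewrite ge_max g0 andbT lerBlDr lerDl.
  have [_ _] := dominated_convergence measurableT mf_ (measurable_cst _) f_f ig f_g.
  rewrite integral_cst// mul0e => conv.
  have ev := ecvg_ev conv e30.
  near \oo => M; exists M; near: M; exact: ev.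
pose u j x := `|\1_(~` A j) x * f j x|.
have mu_ j : measurable_fun setT (u j).
  apply: measurableT_comp => //; apply: measurable_funM; last exact: mf.
  by apply: measurable_indic; exact: measurableC.
have wfin j : (\int[mu]_x (u j x)%:E)%E \is a fin_num.
  have w0 : (0 <= \int[mu]_x (u j x)%:E)%E by apply: integral_ge0 => x _; rewrite lee_fin /u.
  rewrite ge0_fin_numE//.
  have /integrableP[_ fj] := fi j.
  apply: le_lt_trans fj; apply: ge0_le_integral => //.
  - by move=> x _; rewrite lee_fin /u.
  - by apply/measurable_EFinP; exact: mu_.
  - by apply: measurableT_comp => //; exact: (measurable_int mu (fi j)).
  - move=> x _; rewrite /u abse_EFin lee_fin normrM.
    rewrite -{2}(mul1r `|f j x|) ler_wpM2r// indicE; case: (_ \in _) => //=.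
    by rewrite normr1.
    by rewrite normr0.
pose w j := fine (\int[mu]_x (u j x)%:E)%E.
have wc : w @ \oo --> 0 by exact: fine_cvg h2.
have ev1 : \forall n \near \oo, av w n < e3 by exact: (cvgr_lt 0 (cesaro_av wc)).
pose dl := e3 / (M%:R + 1).
have dl0 : 0 < dl by rewrite divr_gt0// ltr_pwDr ?ler0n.
have ev2 := ecvg_ev h1 dl0.
apply: (filterS2 _ _ ev1 ev2) => n hw hA.
have mF1 : measurable_fun setT (fun x => (av (fun j => u j x) n)%:E).
  by apply/measurable_EFinP; exact: mavgu.
have mF2 : measurable_fun setT (fun x => (M%:R * `|avg (fun n => (\1_(A n) : T -> R)) n x|)%:E).
  apply/measurable_EFinP; apply: measurable_funM; first exact: measurable_cst.
  apply: measurableT_comp => //; apply: mavgu => j; exact: measurable_indic.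
have mF3 : measurable_fun setT (fun x => (Num.max (g x - M%:R) 0)%:E).
  apply/measurable_EFinP; apply: measurable_maxr; [|exact: measurable_cst].
  by apply: measurable_funB => //; exact: measurable_cst.
have F10 x : (0 <= (av (fun j => u j x) n)%:E)%E by rewrite lee_fin; apply: av_ge0 => j; rewrite /u.
have F20 x : (0 <= (M%:R * `|avg (fun n => (\1_(A n) : T -> R)) n x|)%:E)%E.
  by rewrite lee_fin mulr_ge0.
have F30 x : (0 <= (Num.max (g x - M%:R) 0)%:E)%E by rewrite lee_fin le_max lexx orbT.
apply: (@le_trans _ _ (\int[mu]_x ((av (fun j => u j x) n)%:E +
   (M%:R * `|avg (fun n => (\1_(A n) : T -> R)) n x|)%:E +
   (Num.max (g x - M%:R) 0)%:E))%E).
  apply: ae_ge0_le_integral => //.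
  - by apply: mEabs; exact: mavg.
  - by move=> x _; rewrite !adde_ge0.
  - by apply: emeasurable_funD => //; exact: emeasurable_funD.
  - apply: (filterS _ good) => x [x0 xg] _; rewrite -!EFinD lee_fin.
    have := @bwd_bound (fun j => f j x) (fun j => \1_(A j) x) (g x) M%:R n.
    have -> : av (fun j => `|(1 - \1_(A j) x) * f j x|) n = av (fun j => u j x) n.
      by rewrite /av; congr (_ * _); apply: eq_bigr => j _; rewrite /u indicCR.
    apply.
    + by move=> j; rewrite x0 xg.
    + by move=> j; rewrite indicE; case: (x \in A j); rewrite ?ler01 ?lexx.
    + exact: ler0n.
rewrite ge0_integralD//; [|by move=> x _; rewrite adde_ge0|exact: emeasurable_funD].
rewrite ge0_integralD//.
have -> : (\int[mu]_x (av (fun j => u j x) n)%:E = (av w n)%:E)%E.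
{ under eq_integral do rewrite /av EFinM -sumEFin.
  rewrite ge0_integralZl_EFin//; last 2 first.
  - by move=> x _; apply: sume_ge0 => j _; rewrite lee_fin /u.
  - by apply: emeasurable_sum => j; apply/measurable_EFinP; exact: mu_.
  rewrite ge0_integral_sum//; last first.
  - by move=> j x _; rewrite lee_fin /u.
  - by move=> j; apply/measurable_EFinP; exact: mu_.
  rewrite /av EFinM -sumEFin; congr (_ * _)%E; apply: eq_bigr => j _.
  by rewrite /w fineK. }
under eq_integral do rewrite EFinM.
rewrite ge0_integralZl_EFin//; last by apply: mEabs; apply: mavgu => j; exact: measurable_indic.
apply: (@le_trans _ _ (e3%:E + (M%:R * dl)%:E + e3%:E)%E).
  apply: leeD; last exact: hM.
  apply: leeD; first by rewrite lee_fin ltW.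
  by rewrite EFinM lee_wpmul2l// lee_fin.
rewrite -!EFinD lee_fin.
have : M%:R * dl <= e3.
  rewrite /dl mulrA ler_pdivrMr ?ltr_pwDr ?ler0n// mulrC ler_wpM2l ?(ltW e30)//.
  by rewrite lerDl.
move=> h; apply: (@le_trans _ _ (e3 + e3 + e3)); first by rewrite lerD2r lerD2l.
by rewrite /e3; lra.
Unshelve. all: by end_near. Qed.
End part_ae.

Theorem corollary5p1 (d : measure_display) (T : measurableType d) (R : realType)
  (mu : {finite_measure set T -> \bar R}) (f : nat -> T -> R) (g : T -> R) :
  (forall n, mu.-integrable setT (fun x => (f n x)%:E)) ->
  (forall n, {ae mu, forall x, 0 <= f n x}) ->
  mu.-integrable setT (fun x => (g x)%:E) ->
  (forall n, {ae mu, forall x, f n x <= g x}) ->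
  (cvg0_ae mu (avg f) <->
    exists A : nat -> set T, (forall n, measurable (A n)) /\
      cvg0_ae mu (avg (fun n => \1_(A n))) /\
      cvg0_ae mu (fun n x => \1_(~` A n) x * f n x))
  /\
  (cvg0_L1 mu (avg f) <->
    exists A : nat -> set T, (forall n, measurable (A n)) /\
      cvg0_L1 mu (avg (fun n => \1_(A n))) /\
      cvg0_L1 mu (fun n x => \1_(~` A n) x * f n x)).
Proof.
move=> fi f0 gi fg; split; split.
- by apply: (@ae_fwd _ _ _ mu f g).
- by apply: (@ae_bwd _ _ _ mu f g).
- by apply: (@L1_fwd _ _ _ mu f g).
- by apply: (@L1_bwd _ _ _ mu f g).
Qed.
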